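(* Let $\Lambda$ be a set with $2\leq|\Lambda|\leq\omega$, and for every $\lambda\in\Lambda$ let $\mathbf{H}(\lambda)$ be a $\pi$-tree on a topological space $X_\lambda$. Suppose that for every finite nonempty $I\subseteq\Lambda$: whenever $R_i\in\mathrm{Rise}_{\mathbf{H}(i)}(X_i)$ for all $i\in I$, the set $\bigcap_{i\in I}R_i$ is infinite. Then the Tychonoff product $\prod_{\lambda\in\Lambda}X_\lambda$ has a $\pi$-tree.
   Context: Neighbourhoods are not necessarily open. $\omega=\{0,1,2,\dots\}$, ${}^{<\omega}\omega$ is the set of finite sequences of natural numbers. A tree is a strict partial order in which the set of predecessors of every node is well-ordered; $\mathrm{height}(x)$ is the ordinal isomorphic to the set of predecessors of $x$; a branch is a maximal chain; $\mathrm{sons}(x)$ is the set of immediate successors of $x$; $0$ denotes the least node. A foliage tree is a pair $\mathbf{F}=(T,l)$ with $T$ a tree (skeleton) and $l$ a function on its nodes, $\mathbf{F}_x:=l(x)$ the leaf at $x$; tree notions apply via the skeleton. $\mathrm{shoot}_{\mathbf{F}}(v)=\{\bigcup_{x\in C}\mathbf{F}_x: C\text{ a cofinite subset of }\mathrm{sons}_{\mathbf{F}}(v)\}$; $\mathrm{scope}_{\mathbf{F}}(p)=\{x:p\in\mathbf{F}_x\}$. For families $\gamma,\delta$ of sets, $\gamma\gg\delta$ means every nonempty $D\in\delta$ contains some nonempty $G\in\gamma$. $\mathrm{rise}_{\mathbf{F}}(p,U)=\{\mathrm{height}_{\mathbf{F}}(v): v\in\mathrm{scope}_{\mathbf{F}}(p),\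 \mathrm{shoot}_{\mathbf{F}}(v)\gg\{U\}\}$; $\mathrm{Rise}_{\mathbf{F}}(X)=\{\mathrm{rise}_{\mathbf{F}}(p,U):p\in X,\ U\text{ a neighbourhood of }p\text{ in }X\}$. $\mathbf{F}$ is locally strict if each non-maximal leaf $\mathbf{F}_x$ is the disjoint union of the leaves $\mathbf{F}_s$, $s\in\mathrm{sons}(x)$; has strict branches if it has a node and for each branch $B$, $\bigcap_{x\in B}\mathbf{F}_x$ is a singleton; is open in $X$ if all leaves are open in $X$; is a foliage $\omega,\omega$-tree if its skeleton is order-isomorphic to $({}^{<\omega}\omega,\subsetneq)$. A Baire foliage tree on $X$ is an open in $X$, locally strict foliage $\omega,\omega$-tree with strict branches and $\mathbf{F}_{0_{\mathbf{F}}}=X$. $\mathbf{F}$ grows into $X$ if for every $p\in X$ and neighbourhood $U$ of $p$ there is $z\in\mathrm{scope}_{\mathbf{F}}(p)$ with $\mathrm{shoot}_{\mathbf{F}}(z)\gg\{U\}$. A $\pi$-tree on $X$ is a Baire foliage tree on $X$ that grows into $X$; a space has a $\pi$-tree if there is a $\pi$-tree on it. *)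

(* Defs.v *)
From HB Require Import structures.
From mathcomp Require Import all_boot all_order.
From mathcomp Require Import classical_sets boolp cardinality topology.
Set Implicit Arguments. Unset Strict Implicit. Unset Printing Implicit Defensive.
Local Open Scope classical_set_scope.

(* The skeleton ({}^{<omega} omega, proper-prefix order). A foliage
   omega,omega-tree on X is represented (up to skeleton isomorphism) by its
   leaf function on seq nat. *)
Definition foliage (X : Type) := seq nat -> set X.

Definition node_lt (s t : seq nat) : Prop := prefix s t /\ s <> t.

Definition sons (v : seq nat) : set (seq nat) := [set rcons v n | n in [set: nat]].

(* height(x) = order type of the predecessors of x (a natural number here) *)
Definition height (v : seq nat) : nat := size v.

Definition is_chain (B : set (seq nat)) : Prop :=
  forall s t, B s -> B t -> s = t \/ node_lt s t \/ node_lt t s.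
Definition is_branch (B : set (seq nat)) : Prop :=
  is_chain B /\ forall C, is_chain C -> B `<=` C -> C = B.

Definition gg (T : Type) (gamma delta : set (set T)) : Prop :=
  forall D, delta D -> D <> set0 -> exists2 G, gamma G & G <> set0 /\ G `<=` D.

Definition shoot (X : Type) (F : foliage X) (v : seq nat) : set (set X) :=
  [set \bigcup_(x in C) F x | C in
     [set C : set (seq nat) | C `<=` sons v /\ finite_set (sons v `\` C)]].

Definition scope (X : Type) (F : foliage X) (p : X) : set (seq nat) :=
  [set x | F x p].

Definition rise (X : Type) (F : foliage X) (p : X) (U : set X) : set nat :=
  [set height v | v in [set v | scope F p v /\ gg (shoot F v) [set U]]].

Definition Rise (X : topologicalType) (F : foliage X) : set (set nat) :=
  [set R | exists p : X, exists2 U, nbhs p U & R = rise F p U].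

Definition locally_strict (X : Type) (F : foliage X) : Prop :=
  (* every node of the skeleton is non-maximal *)
  forall x, F x = \bigcup_(s in sons x) F s /\
            (forall s t, sons x s -> sons x t -> s <> t -> F s `&` F t = set0).

Definition strict_branches (X : Type) (F : foliage X) : Prop :=
  forall B, is_branch B -> exists p : X, \bigcap_(x in B) F x = [set p].

Definition open_foliage (X : topologicalType) (F : foliage X) : Prop :=
  forall x, open (F x).

Definition Baire_foliage_tree (X : topologicalType) (F : foliage X) : Prop :=
  open_foliage F /\ locally_strict F /\ strict_branches F /\ F [::] = setT.

Definition grows_into (X : topologicalType) (F : foliage X) : Prop :=
  forall (p : X) U, nbhs p U -> exists2 z, scope F p z & gg (shoot F z) [set U].

Definition pi_tree (X : topologicalType) (F : foliage X) : Prop :=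
  Baire_foliage_tree F /\ grows_into F.

Definition has_pi_tree (X : topologicalType) : Prop :=
  exists F : foliage X, pi_tree F.

(* Main.v *)
Require Import Defs.
From mathcomp Require Import all_boot all_order.
From mathcomp Require Import classical_sets boolp cardinality topology.
From mathcomp Require Import zify.
Set Implicit Arguments. Unset Strict Implicit. Unset Printing Implicit Defensive.

Definition pc (a b : nat) : nat := if a <= b then 2 * (b - a) else 2 * (a - b - 1) + 1.
Definition unpair (m c : nat) : nat * nat :=
  if c %% 2 == 0 then (m, m + c %/ 2) else (m + c %/ 2 + 1, m).

Lemma unpairK a b : unpair (minn a b) (pc a b) = (a, b).
Proof.
rewrite /unpair /pc; case: (leqP a b) => h.
  have -> : (2 * (b - a)) %% 2 == 0 by apply/eqP; lia.
  congr pair; lia.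
have -> : (2 * (a - b - 1) + 1) %% 2 == 0 = false by apply/negbTE/eqP; lia.
congr pair; lia.
Qed.

Lemma pairK m c : minn (unpair m c).1 (unpair m c).2 = m /\ pc (unpair m c).1 (unpair m c).2 = c.
Proof.
rewrite /unpair /pc; case: eqP => h /=.
  have -> : m <= m + c %/ 2 by lia.
  split; lia.
have -> : (m + c %/ 2 + 1 <= m) = false by lia.
split; lia.
Qed.

Fixpoint encA (a : nat) (l : seq nat) : nat * seq nat :=
  match l with
  | [::] => (a, [::])
  | b :: l' => let: (m, r) := encA b l' in (minn a m, pc a m :: r)
  end.

Fixpoint decA (m : nat) (r : seq nat) : seq nat :=
  match r with
  | [::] => [:: m]
  | c :: r' => (unpair m c).1 :: decA (unpair m c).2 r'
  end.

Definition enc (l : seq nat) : seq nat :=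
  match l with [::] => [::] | a :: l' => (encA a l').1 :: (encA a l').2 end.
Definition dec (l : seq nat) : seq nat :=
  match l with [::] => [::] | m :: r => decA m r end.

Lemma encA_eq a l : encA a l = ((encA a l).1, (encA a l).2).
Proof. by case: (encA a l). Qed.

Lemma decA_encA l a : decA (encA a l).1 (encA a l).2 = a :: l.
Proof.
elim: l a => [|b l IH] a //=.
rewrite (encA_eq b l) /=.
by rewrite unpairK /= IH.
Qed.

Lemma size_encA l a : size (encA a l).2 = size l.
Proof. elim: l a => [|b l IH] a //=; by rewrite (encA_eq b l) /= IH. Qed.

Lemma size_enc l : size (enc l) = size l.
Proof. by case: l => //= a l; rewrite size_encA. Qed.

Lemma decK : cancel enc dec.
Proof. by case=> //= a l; exact: decA_encA. Qed.

Lemma enc_inj : injective enc.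
Proof. exact: can_inj decK. Qed.

Lemma decA_cons m r : exists x t, decA m r = x :: t /\ encA x t = (m, r).
Proof.
elim: r m => [|c r IH] m /=; first by exists m, [::].
have [x [t [e1 e2]]] := IH (unpair m c).2.
exists (unpair m c).1, (x :: t); split; first by rewrite e1.
rewrite /= e2 /=; have [h1 h2] := pairK m c; by rewrite h1 h2.
Qed.

Lemma encK : cancel dec enc.
Proof.
case=> //= m r; have [x [t [-> e]]] := decA_cons m r.
by rewrite /= e.
Qed.

Lemma size_dec l : size (dec l) = size l.
Proof. by rewrite -{2}(encK l) size_enc. Qed.

Lemma encA_min l a x : x \in a :: l -> (encA a l).1 <= x.
Proof.
elim: l a => [|b l IH] a /=; first by rewrite inE => /eqP ->.
rewrite (encA_eq b l) /= in_cons => /orP [/eqP ->|h]; first by rewrite geq_minl.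
exact: (leq_trans (geq_minr a (encA b l).1) (IH b h)).
Qed.

Lemma enc_min l x : x \in l -> head 0 (enc l) <= x.
Proof. by case: l => //= a l; exact: encA_min. Qed.

Section Code.
Variable valid : pred nat.
Variable j0 : nat.
Hypothesis vj0 : valid j0.

Definition gp (n : nat) : seq (nat * nat) :=
  [seq (j, n) | j <- [seq j <- iota 0 n.+1 | valid j]] ++
  (if valid n then [seq (n, k) | k <- iota 0 n] else [::]).

Lemma mem_gp n j k : ((j, k) \in gp n) = valid j && (maxn j k == n).
Proof.
rewrite /gp mem_cat; apply/idP/idP.
  case/orP.
    case/mapP => j'; rewrite mem_filter mem_iota => /andP [vj hj] [-> ->].
    by rewrite vj /=; apply/eqP; lia.
  case: ifP => // vn /mapP [k']; rewrite mem_iota => hk [-> ->].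
  by rewrite vn /=; apply/eqP; lia.
case/andP => vj /eqP hm.
case: (eqVneq k n) => hkn.
  apply/orP; left; apply/mapP; exists j; last by rewrite hkn.
  by rewrite mem_filter vj mem_iota; lia.
apply/orP; right.
have ejn : j = n by lia.
rewrite -ejn vj; apply/mapP; exists k => //; rewrite mem_iota; lia.
Qed.

Lemma uniq_gp n : uniq (gp n).
Proof.
rewrite /gp cat_uniq; apply/and3P; split.
- rewrite map_inj_uniq; first by apply: filter_uniq; exact: iota_uniq.
  by move=> a b [].
- apply/hasPn => q /=; case: ifP => // vn /mapP [k]; rewrite mem_iota => hk ->.
  apply/negP => /mapP [j _ [_ e]]; lia.
- case: ifP => // _; rewrite map_inj_uniq ?iota_uniq //; by move=> a b [].
Qed.

Definition vals (w : nat -> nat -> nat) n := [seq w q.1 q.2 | q <- gp n].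

Fixpoint cp w n : seq nat :=
  match n with 0 => [::] | n.+1 => cp w n ++ enc (vals w n) end.

Fixpoint sz n : nat := match n with 0 => 0 | n.+1 => sz n + size (gp n) end.

Lemma size_cp w n : size (cp w n) = sz n.
Proof. by elim: n => //= n IH; rewrite size_cat IH size_enc size_map. Qed.

Lemma cp_prefix w n m : n <= m -> exists r, cp w m = cp w n ++ r.
Proof.
move=> /subnK <-; elim: (m - n) => [|t [r IH]]; first by exists [::]; rewrite cats0.
by exists (r ++ enc (vals w (t + n))); rewrite addSn /= IH catA.
Qed.

Lemma gp_ne m : j0 <= m -> 0 < size (gp m).
Proof.
move=> h; have : (j0, m) \in gp m by rewrite mem_gp vj0 /=; apply/eqP; lia.
by case: (gp m).
Qed.

Lemma sz_ge t : t <= sz (j0 + t).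
Proof.
elim: t => [|t IH] //; rewrite addnS /=.
have := gp_ne (leq_addr t j0); lia.
Qed.

Lemma sz_mono n m : n <= m -> sz n <= sz m.
Proof.
move=> /subnK <-; elim: (m - n) => [|t IH] //; rewrite addSn /=; lia.
Qed.

Definition code w i := nth 0 (cp w (j0 + i.+1)) i.

Lemma code_cp w N i : i < sz N -> code w i = nth 0 (cp w N) i.
Proof.
move=> hi; rewrite /code.
have hi' : i < sz (j0 + i.+1) by have := sz_ge i.+1; lia.
case: (leqP N (j0 + i.+1)) => h.
  have [r ->] := cp_prefix w h; by rewrite nth_cat size_cp hi.
have [r ->] := cp_prefix w (ltnW h); by rewrite nth_cat size_cp hi'.
Qed.

Lemma cp_mkseq w N : cp w N = mkseq (code w) (sz N).
Proof.
apply: (@eq_from_nth _ 0); first by rewrite size_cp size_mkseq.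
move=> i; rewrite size_cp => hi; by rewrite nth_mkseq // (code_cp w hi).
Qed.

Lemma cp_local w w' N :
  (forall j k, valid j -> maxn j k < N -> w j k = w' j k) -> cp w N = cp w' N.
Proof.
elim: N => [|N IH] h //=.
rewrite IH; last by move=> j k vj hk; apply: h => //; lia.
congr (_ ++ enc _); apply/eq_in_map => -[j k]; rewrite mem_gp => /andP [vj /eqP hm].
by apply: h => /=; lia.
Qed.

Lemma cp_inj w w' N : cp w N = cp w' N ->
  forall j k, valid j -> maxn j k < N -> w j k = w' j k.
Proof.
elim: N => [|N IH] //= e j k vj hk.
have /andP [/eqP e1 /eqP e2] : (cp w N == cp w' N) && (enc (vals w N) == enc (vals w' N)).
  by rewrite -eqseq_cat ?e // !size_cp.
case: (ltnP (maxn j k) N) => hjk; first exact: IH.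
have hm : (j, k) \in gp N by rewrite mem_gp vj /=; apply/eqP; lia.
have e3 := enc_inj e2; rewrite /vals in e3.
by have /eq_in_map /(_ _ hm) := e3.
Qed.

Lemma cp_min w n j : valid j -> j <= n -> nth 0 (cp w n.+1) (sz n) <= w j n.
Proof.
move=> vj hj /=; rewrite nth_cat size_cp ltnn subnn.
have hm : (j, n) \in gp n by rewrite mem_gp vj /=; apply/eqP; lia.
rewrite nth0; apply: enc_min; apply/mapP; by exists (j, n).
Qed.

Lemma map_index_nth (T : eqType) (s : seq T) (l : seq nat) :
  uniq s -> size l = size s -> [seq nth 0 l (index q s) | q <- s] = l.
Proof.
move=> us hs.
case: s us hs => [|q0 s'] us hs; first by case: l hs.
apply: (@eq_from_nth _ 0); first by rewrite size_map hs.
move=> i; rewrite size_map => hi.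
by rewrite (nth_map q0) // index_uniq.
Qed.

Lemma code_surj (a : nat -> nat) : exists w, forall i, code w i = a i.
Proof.
pose seg n := [seq a i | i <- iota (sz n) (size (gp n))].
pose w j k := nth 0 (dec (seg (maxn j k))) (index (j, k) (gp (maxn j k))).
have hv n : vals w n = dec (seg n).
  rewrite /vals -[RHS](map_index_nth (uniq_gp n)); last by rewrite size_dec size_map size_iota.
  apply/eq_in_map => -[j k]; rewrite mem_gp => /andP [_ /eqP hm] /=.
  by rewrite /w hm.
have hcp N : cp w N = mkseq a (sz N).
  elim: N => [|N IH] //=; rewrite IH hv encK /seg /mkseq.
  by rewrite iotaD add0n map_cat.
exists w => i; rewrite /code hcp nth_mkseq //.
have := sz_ge i.+1; lia.
Qed.

End Code.

Local Open Scope classical_set_scope.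

Lemma prefix_take_eq (s t : seq nat) : prefix s t -> s = take (size s) t.
Proof. by rewrite prefixE => /eqP ->. Qed.

Lemma cmpE (s t : seq nat) :
  (s = t \/ node_lt s t \/ node_lt t s) <-> (prefix s t \/ prefix t s).
Proof.
split.
  by case=> [->|[[h _]|[h _]]]; [left; exact: prefix_refl|left|right].
case=> h; have [->|ne] := eqVneq s t; try by left.
  by right; left; split => //; exact/eqP.
by right; right; split => //; apply/eqP; rewrite eq_sym.
Qed.

Lemma prefix_cmp (s t u : seq nat) : prefix s u -> prefix t u -> prefix s t \/ prefix t s.
Proof.
move=> /prefix_take_eq hs /prefix_take_eq ht.
case: (leqP (size s) (size t)) => h.
  left; rewrite prefixE; apply/eqP.
  by rewrite [in LHS]ht take_takel // -hs.
right; rewrite prefixE; apply/eqP.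
by rewrite [in LHS]hs take_takel ?(ltnW h) // -ht.
Qed.

Definition brs (a : nat -> nat) : set (seq nat) := [set s | s = mkseq a (size s)].

Lemma brsE a s : brs a s <-> s = mkseq a (size s).
Proof. by []. Qed.

Lemma chainE (B : set (seq nat)) :
  is_chain B <-> forall s t, B s -> B t -> prefix s t \/ prefix t s.
Proof.
split=> h s t Bs Bt; first by apply/cmpE; exact: h.
by apply/cmpE; exact: h.
Qed.

Lemma take_mkseq' (a : nat -> nat) n m : n <= m -> take n (mkseq a m) = mkseq a n.
Proof.
move=> h.
have hsz : size (take n (mkseq a m)) = n by rewrite size_takel // size_mkseq.
apply: (@eq_from_nth _ 0); first by rewrite hsz size_mkseq.
move=> i; rewrite hsz => hi.
rewrite nth_take; last by lia.
by rewrite !nth_mkseq //; lia.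
Qed.

Lemma mkseq_prefix (a : nat -> nat) n m : n <= m -> prefix (mkseq a n) (mkseq a m).
Proof. by move=> h; rewrite prefixE size_mkseq take_mkseq'. Qed.

Lemma brs_branch a : is_branch (brs a).
Proof.
split.
  apply/chainE => s t hs ht.
  case: (leqP (size s) (size t)) => h; [left|right]; rewrite hs ht; apply: mkseq_prefix => //.
  exact: ltnW.
move=> C /chainE hC sub; apply/seteqP; split => //.
move=> t Ct.
have Bu : brs a (mkseq a (size t).+1) by apply/brsE; rewrite size_mkseq.
case: (hC _ _ Ct (sub _ Bu)) => h.
  by apply/brsE; rewrite {1}(prefix_take_eq h) take_mkseq' ?leqnSn.
by have := size_prefix h; rewrite size_mkseq ltnn.
Qed.

Lemma branch_brs B : is_branch B -> exists a, B = brs a.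
Proof.
move=> [/chainE hc hmax].
have addB u : (forall t, B t -> prefix u t \/ prefix t u) -> B u.
  move=> hu.
  have : is_chain (B `|` [set u]).
    apply/chainE => s t [Bs|->] [Bt|->]; first exact: hc.
    - by case: (hu s Bs); [right|left].
    - exact: hu.
    - by left; exact: prefix_refl.
  move=> /hmax <-; [by right|by move=> x Bx; left].
have pref s t : B s -> prefix t s -> B t.
  move=> Bs hts; apply: addB => u Bu.
  case: (hc _ _ Bs Bu) => h.
    by left; exact: prefix_trans hts h.
  exact: prefix_cmp hts h.
have B0 : B [::] by apply: addB => t _; left; exact: prefix0s.
have ext s : B s -> exists t, B t /\ size s < size t.
  move=> Bs; apply: contrapT => hn.
  have : B (rcons s 0).
    apply: addB => t Bt; case: (hc _ _ Bs Bt) => h; last first.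
      by right; exact: prefix_trans h (prefix_rcons s 0).
    have ht : size t <= size s by apply: contrapT => /negP; rewrite -ltnNge => ht; apply: hn; exists t.
    have e : s = t by rewrite (prefix_take_eq h) take_oversize.
    by rewrite -e; right; exact: prefix_rcons.
  by move=> hr; apply: hn; exists (rcons s 0); rewrite size_rcons.
have uniqB s t : B s -> B t -> size s = size t -> s = t.
  move=> Bs Bt e; case: (hc _ _ Bs Bt) => h.
    by rewrite (prefix_take_eq h) e take_size.
  by rewrite {1}(prefix_take_eq h) -e take_size.
have exn n : exists s, B s /\ size s = n.
  elim: n => [|n [s [Bs hs]]]; first by exists [::].
  have [t [Bt ht]] := ext s Bs.
  exists (take n.+1 t); split; last by rewrite size_takel; lia.
  by apply: (pref t) => //; exact: prefix_take.
pose sel n := xget [::] [set s | B s /\ size s = n].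
have selP n : B (sel n) /\ size (sel n) = n by exact: (@xgetPex _ [::] [set s | B s /\ size s = n] (exn n)).
pose a k := nth 0 (sel k.+1) k.
have fw s : B s -> s = mkseq a (size s).
  move=> Bs; apply: (@eq_from_nth _ 0); first by rewrite size_mkseq.
  move=> i hi; rewrite nth_mkseq // /a.
  have [Bsel hsel] := selP i.+1.
  have -> : sel i.+1 = take i.+1 s.
    apply: uniqB => //; first by apply: (pref s) => //; exact: prefix_take.
    by rewrite hsel size_takel.
  by rewrite nth_take.
exists a; apply/seteqP; split => s; first exact: fw.
move/brsE => ->; have [Bsel hsel] := selP (size s).
by rewrite -hsel -(fw _ Bsel).
Qed.

Lemma nat_bound (D : set nat) : finite_set D -> exists N, forall d, D d -> d < N.
Proof.
move=> /finite_fsetP [B ->]; exists (\max_(x <- finmap.enum_fset B) x).+1 => d /= hd.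
rewrite ltnS; exact: (@leq_bigmax_seq _ (finmap.enum_fset B) xpredT id d hd).
Qed.

Section Node.
Variable T : Type.
Variable F : foliage T.
Hypothesis Fls : locally_strict F.
Hypothesis Fsb : strict_branches F.
Hypothesis Froot : F [::] = setT.

Definition digit (x : T) (s : seq nat) : nat := xget 0 [set d | F (rcons s d) x].

Fixpoint node (x : T) (n : nat) : seq nat :=
  match n with 0 => [::] | n.+1 => rcons (node x n) (digit x (node x n)) end.

Lemma size_node x n : size (node x n) = n.
Proof. by elim: n => //= n IH; rewrite size_rcons IH. Qed.

Lemma son_in s x : F s x -> exists d, F (rcons s d) x.
Proof.
move=> h; have [e _] := Fls s; rewrite e in h.
by case: h => t [d _ <-] ht; exists d.
Qed.

Lemma father_in s d x : F (rcons s d) x -> F s x.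
Proof.
move=> h; have [e _] := Fls s; rewrite e.
by exists (rcons s d) => //; exists d.
Qed.

Lemma node_in x n : F (node x n) x.
Proof.
elim: n => [|n IH] /=; first by rewrite Froot.
exact: (@xgetPex _ 0 [set d | F (rcons (node x n) d) x] (son_in IH)).
Qed.

Lemma digit_uniq s d d' x : F (rcons s d) x -> F (rcons s d') x -> d = d'.
Proof.
move=> h1 h2; apply: contrapT => ne.
have [_ disj] := Fls s.
have : (F (rcons s d) `&` F (rcons s d')) x by split.
rewrite disj //; [by exists d|by exists d'|].
by move=> /rcons_inj [].
Qed.

Lemma node_uniq s x : F s x -> s = node x (size s).
Proof.
elim/last_ind: s => [|s d IH] h //.
have hs := father_in h; have e := IH hs.
rewrite size_rcons /= -e; congr rcons.
apply: (digit_uniq h); have := node_in x (size s).+1; by rewrite /= -e.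
Qed.

Definition addr (x : T) (k : nat) : nat := nth 0 (node x k.+1) k.

Lemma node_mkseq x n : node x n = mkseq (addr x) n.
Proof.
elim: n => [|n IH] //; rewrite mkseqS -IH /addr /= nth_rcons size_node ltnn eqxx.
by [].
Qed.

Lemma leaf_node x y n : F (node x n) y <-> node y n = node x n.
Proof.
split=> [h|<-]; last exact: node_in.
by rewrite [in RHS](node_uniq h) size_node.
Qed.

Lemma in_brs (a : nat -> nat) x : (forall k, addr x k = a k) ->
  (\bigcap_(s in brs a) F s) x.
Proof.
move=> h s /brsE e; rewrite e.
have -> : mkseq a (size s) = node x (size s).
  by rewrite node_mkseq; apply: eq_mkseq => k; rewrite h.
exact: node_in.
Qed.

Lemma addr_surj (a : nat -> nat) : exists x, forall k, addr x k = a k.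
Proof.
have [p hp] := Fsb (brs_branch a).
exists p => k.
have : (\bigcap_(s in brs a) F s) p by rewrite hp.
move=> /(_ (mkseq a k.+1)) h.
have hb : brs a (mkseq a k.+1) by apply/brsE; rewrite size_mkseq.
have := node_uniq (h hb); rewrite size_mkseq => e.
by rewrite /addr -e nth_mkseq.
Qed.

Lemma addr_inj x y : (forall k, addr x k = addr y k) -> x = y.
Proof.
move=> h; have [p hp] := Fsb (brs_branch (addr y)).
have hx := in_brs h; have hy := in_brs (fun k => erefl (addr y k)).
rewrite hp in hx hy; by rewrite hx hy.
Qed.

Lemma shoot_bound v (U : set T) : U !=set0 -> gg (shoot F v) [set U] ->
  exists N, forall d, N <= d -> F (rcons v d) `<=` U.
Proof.
move=> [u Uu] hg.
have [|G [C [Csub Cfin] eG] [G0 GU]] := hg U erefl.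
  by move=> e; rewrite e in Uu.
have fD : finite_set [set d | ~ C (rcons v d)].
  have -> : [set d | ~ C (rcons v d)] = (rcons v) @^-1` (sons v `\` C).
    apply/seteqP; split => d /=; last by case.
    by move=> h; split => //; exists d.
  apply: finite_preimage => //; move=> d1 d2 _ _; exact: rcons_injr.
have [N hN] := nat_bound fD.
exists N => d hd y Fy; apply: GU; rewrite -eG; exists (rcons v d) => //.
apply: contrapT => nC; have := hN d nC; lia.
Qed.

End Node.

Section Prod.
Variable (L : Type) (X : L -> topologicalType).

Lemma proj_nbhs (f : prod_topology X) (l : L) (A : set (X l)) :
  nbhs (f l) A -> nbhs f [set g : prod_topology X | A (g l)].
Proof.
move=> hA.
have h := (@cvg_sup (forall i, X i) L _ (nbhs f) f _).1 (@cvg_id _ (nbhs f)) l.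
apply: h.
move: hA; rewrite nbhsE => -[B [oB Bf] sBA].
rewrite nbhsE; exists [set g | B (g l)]; last by move=> g /= /sBA.
split => //; by exists B.
Qed.

Variable iota : L -> nat.

Definition boxF (p : prod_topology X) : set_system (prod_topology X) :=
  [set U | exists b (V : forall l, set (X l)),
     (forall l, iota l < b -> nbhs (p l) (V l)) /\
     (forall y, (forall l, iota l < b -> V l (y l)) -> U y)].

Lemma boxF_filter p : Filter (boxF p).
Proof.
constructor.
- exists 0, (fun l => setT); split => // l; lia.
- move=> U1 U2 [b1 [V1 [h1 h1']]] [b2 [V2 [h2 h2']]].
  exists (maxn b1 b2), (fun l => [set z | (iota l < b1 -> V1 l z) /\ (iota l < b2 -> V2 l z)]).
  split.
    move=> l hl.
    have n1 : nbhs (p l) [set z | iota l < b1 -> V1 l z].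
      case: (ltnP (iota l) b1) => c; first by apply: filterS (h1 l c) => z hz _.
      apply: (@filterS _ (nbhs (p l)) _ setT); last exact: filterT.
      by move=> z _ hc; exfalso; lia.
    have n2 : nbhs (p l) [set z | iota l < b2 -> V2 l z].
      case: (ltnP (iota l) b2) => c; first by apply: filterS (h2 l c) => z hz _.
      apply: (@filterS _ (nbhs (p l)) _ setT); last exact: filterT.
      by move=> z _ hc; exfalso; lia.
    exact: filterI n1 n2.
  move=> y hy; split.
    by apply: h1' => l hl; have [+ _] := hy l ltac:(lia); apply.
  by apply: h2' => l hl; have [_ +] := hy l ltac:(lia); apply.
- move=> P Q PQ [b [V [h h']]]; exists b, V; split => // y hy.
  exact/PQ/h'.
Qed.

Lemma nbhs_box (p : prod_topology X) U : nbhs p U -> boxF p U.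
Proof.
have hF := boxF_filter p.
suff : boxF p --> (p : prod_topology X) by apply.
apply/(@cvg_sup (forall i, X i) L _ (boxF p) p hF) => i.
move=> A; rewrite nbhsE => -[B [oB Bp] sBA].
case: oB => C oC eC.
exists (iota i).+1, (fun l => [set z | forall e : l = i, C (eq_rect l X z i e)]).
split.
  move=> l _; case: (pselect (l = i)) => [eli|nli].
    subst l.
    apply: (@filterS _ _ _ C).
      by move=> z Cz e; rewrite (Prop_irrelevance e erefl).
    apply: open_nbhs_nbhs; split => //.
    by have := Bp; rewrite -eC.
  apply: (@filterS _ (nbhs (p l)) _ setT); last exact: filterT.
  by move=> z _ e.
move=> y hy; apply: sBA; rewrite -eC /=.
exact: (hy i (ltnSn _) erefl).
Qed.

End Prod.

Lemma brs_mk a n : brs a (mkseq a n).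
Proof. by apply/brsE; rewrite size_mkseq. Qed.

Lemma unif_bound (A : Type) (f : A -> nat) (finj : injective f)
  (Q : A -> nat -> Prop) b :
  (forall a, f a < b -> exists N, forall d, N <= d -> Q a d) ->
  exists N, forall a, f a < b -> forall d, N <= d -> Q a d.
Proof.
elim: b => [|b IH] h; first by exists 0 => a.
have [N1 h1] := IH (fun a ha => h a (leq_trans ha (leqnSn b))).
case: (pselect (exists a, f a = b)) => [[a0 ea0]|na].
  have [N2 h2] := h a0 ltac:(lia).
  exists (maxn N1 N2) => a ha d hd; case: (ltnP (f a) b) => c.
    by apply: h1 => //; lia.
  have -> : a = a0 by apply: finj; lia.
  by apply: h2; lia.
exists N1 => a ha d hd; case: (ltnP (f a) b) => c; first exact: h1.
by exfalso; apply: na; exists a; lia.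
Qed.

Unset Implicit Arguments.
Section Main.
Variable (Lambda : Type) (X : Lambda -> topologicalType) (H : forall l, foliage (X l)).
Hypothesis hls : forall l : Lambda, locally_strict (H l).
Hypothesis hsb : forall l : Lambda, strict_branches (H l).
Hypothesis hroot : forall l : Lambda, H l [::] = setT.
Hypothesis hopen : forall l : Lambda, open_foliage (H l).
Variable iota : Lambda -> nat.
Hypothesis iota_inj : injective iota.
Variable l1 : Lambda.

Definition inv (j : nat) : option Lambda :=
  match pselect (exists l, iota l = j) with
  | left h => Some (projT1 (cid h))
  | right _ => None
  end.

Lemma inv_iota l : inv (iota l) = Some l.
Proof.
rewrite /inv; case: pselect => [h|h]; last by exfalso; apply: h; exists l.
by congr Some; apply: iota_inj; exact: (projT2 (cid h)).
Qed.

Lemma inv_some j l : inv j = Some l -> iota l = j.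
Proof.
rewrite /inv; case: pselect => // h [<-]; exact: (projT2 (cid h)).
Qed.

Definition valid : pred nat := fun j => isSome (inv j).

Lemma valid_iota l : valid (iota l).
Proof. by rewrite /valid inv_iota. Qed.

Let j0 := iota l1.
Let vj0 : valid j0 := valid_iota l1.

Definition val (x : prod_topology X) (j k : nat) : nat :=
  match inv j with Some l => addr (H l) (x l) k | None => 0 end.

Lemma val_iota x l k : val x (iota l) k = addr (H l) (x l) k.
Proof. by rewrite /val inv_iota. Qed.

Definition cx (x : prod_topology X) := code valid j0 (val x).

Definition G : foliage (prod_topology X) :=
  fun s => [set x | mkseq (cx x) (size s) = s].

Lemma GE s x : G s x <-> mkseq (cx x) (size s) = s.
Proof. by []. Qed.

Lemma cx_surj (a : nat -> nat) : exists x, forall i, cx x i = a i.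
Proof.
have [w hw] := code_surj vj0 a.
have hx l : exists z : X l, forall k, addr (H l) z k = w (iota l) k.
  exact: addr_surj.
pose x : prod_topology X := fun l => projT1 (cid (hx l)).
exists x => i; rewrite -hw /cx /code; congr nth.
apply: (cp_local vj0) => j k vj _.
move: vj; rewrite /val /valid; case e: (inv j) => [l|] // _.
by rewrite (projT2 (cid (hx l))) (inv_some _ _ e).
Qed.

Lemma cx_inj x y : (forall i, cx x i = cx y i) -> x = y.
Proof.
move=> h; apply: functional_extensionality_dep => l.
apply: (addr_inj (hls l) (hsb l) (hroot l)) => k.
rewrite -!val_iota.
have e : cp valid (val x) (iota l + k).+1 = cp valid (val y) (iota l + k).+1.
  by rewrite !(cp_mkseq vj0); apply: eq_mkseq.
apply: (cp_inj vj0 e); [exact: valid_iota|lia].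
Qed.

Lemma G_nonempty s : G s !=set0.
Proof.
have [x hx] := cx_surj (nth 0 s); exists x.
rewrite /G /=; rewrite (eq_mkseq hx); exact: mkseq_nth.
Qed.

Lemma G_open s : open (G s).
Proof.
rewrite openE => x Gx; rewrite /interior.
pose N := j0 + (size s).+1.
have nW M : nbhs x [set y : prod_topology X | forall j, j < M -> forall l, inv j = Some l ->
    node (H l) (y l) N = node (H l) (x l) N].
  elim: M => [|M IH].
    by apply: (@filterS _ _ _ setT); last exact: filterT.
  case e: (inv M) => [l|].
    have hl : nbhs x [set y : prod_topology X | H l (node (H l) (x l) N) (y l)].
      apply: proj_nbhs; apply: open_nbhs_nbhs; split; first exact: hopen.
      exact: node_in.
    apply: filterS (filterI IH hl) => y [h1 h2] j hj l' e'.
    case: (ltnP j M) => c; first exact: (h1 j c l' e').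
    have ejm : j = M by lia.
    rewrite ejm e in e'; case: e' => <-.
    exact/(leaf_node (hls l) (hroot l)).
  apply: filterS IH => y h j hj l' e'.
  case: (ltnP j M) => c; first exact: (h j c l' e').
  have ejm : j = M by lia.
  by rewrite ejm e in e'.
apply: filterS (nW N) => y hy.
rewrite /G /= -{2}Gx.
have ecp : cp valid (val y) N = cp valid (val x) N.
  apply: (cp_local vj0) => j k vj hk; rewrite /val.
  case e: (inv j) => [l|] //.
  have := hy j ltac:(lia) l e; rewrite !node_mkseq => /(congr1 (fun t => nth 0 t k)).
  by rewrite !nth_mkseq //; lia.
have := congr1 (take (size s)) ecp.
have hsz : size s <= sz valid N by have := sz_ge vj0 (size s).+1; rewrite /N; lia.
by rewrite !(cp_mkseq vj0) !take_mkseq'.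
Qed.

Lemma G_ls : locally_strict G.
Proof.
move=> s; split.
  apply/seteqP; split => x.
    move=> Gx; exists (rcons s (cx x (size s))); first by exists (cx x (size s)).
    by rewrite /G /= size_rcons mkseqS Gx.
  move=> [t [d _ <-]]; rewrite /G /= size_rcons mkseqS.
  by case/rcons_inj.
move=> t t' [d _ <-] [d' _ <-] ne; apply/seteqP; split => // x [h1 h2].
move: h1 h2; rewrite /G /= => h1 h2; apply: ne.
by rewrite -h1 -h2 !size_rcons.
Qed.

Lemma G_sb : strict_branches G.
Proof.
move=> B /branch_brs [a ->]; have [x hx] := cx_surj a.
exists x; apply/seteqP; split => y.
  move=> hy; apply: cx_inj => i; rewrite hx.
  have hb : brs a (mkseq a i.+1) by exact: brs_mk.
  have := hy _ hb; move/GE; rewrite size_mkseq => e.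
  have := congr1 (fun t => nth 0 t i) e; by rewrite !nth_mkseq.
move=> /= -> s /brsE e; rewrite /G /= {2}e.
exact: eq_mkseq hx _.
Qed.

Lemma G_root : G [::] = setT.
Proof. by apply/seteqP; split => // x _. Qed.

Hypothesis hrise : forall J : set Lambda, finite_set J -> J <> set0 ->
     forall R : Lambda -> set nat,
       (forall i, J i -> Rise (H i) (R i)) ->
       infinite_set (\bigcap_(i in J) R i).

Lemma G_grows : grows_into G.
Proof.
move=> p U hU.
have [b [V [hV hVU]]] := nbhs_box iota hU.
pose b' := maxn b j0.+1.
pose V' := fun l => [set z : X l | iota l < b -> V l z].
have hV' l : nbhs (p l) (V' l).
  case: (ltnP (iota l) b) => c.
    by apply: filterS (hV l c) => z hz _.
  apply: (@filterS _ _ _ setT); last exact: filterT.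
  by move=> z _ c'; exfalso; lia.
pose J := [set l | iota l < b'].
have Jfin : finite_set J.
  apply: (@sub_finite_set _ _ (iota @^-1` `I_b')) => //.
  apply: finite_preimage; last exact: finite_II.
  by move=> ? ? _ _; exact: iota_inj.
have Jne : J <> set0.
  move=> e; have : J l1 by rewrite /J /= /b' /j0; lia.
  by rewrite e.
pose R := fun l => rise (H l) (p l) (V' l).
have hinf := hrise J Jfin Jne R (fun i _ => ex_intro _ (p i) (ex_intro2 _ _ (V' i) (hV' i) erefl)).
have [n [hn hbn]] : exists n, (\bigcap_(i in J) R i) n /\ b' <= n.
  apply: contrapT => hne; apply: hinf.
  apply: (@sub_finite_set _ _ `I_b'); last exact: finite_II.
  move=> n hn /=; rewrite ltnNge; apply/negP => c; apply: hne; by exists n.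
have [N hN] : exists N, forall l, iota l < b' -> forall d, N <= d ->
    H l (rcons (node (H l) (p l) n) d) `<=` V' l.
  apply: (unif_bound iota_inj) => l hl.
  case: (hn l hl) => v [sc hgg] hv.
  have ev : v = node (H l) (p l) n.
    by rewrite (node_uniq (hls l) (hroot l) sc) -hv.
  rewrite -ev; apply: shoot_bound hgg.
  by exists (p l); exact: nbhs_singleton (hV' l).
have ecx : mkseq (cx p) (sz valid n) = cp valid (val p) n by rewrite (cp_mkseq vj0).
exists (cp valid (val p) n).
  by rewrite /scope /G /= size_cp ecx.
move=> D -> hD.
exists (\bigcup_(t in [set rcons (cp valid (val p) n) d | d in [set d | N <= d]]) G t).
  exists [set rcons (cp valid (val p) n) d | d in [set d | N <= d]] => //; split.
    by move=> t [d _ <-]; exists d.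
  apply: (@sub_finite_set _ _ ((rcons (cp valid (val p) n)) @` `I_N)).
    move=> t [[d _ <-] nC]; exists d => //=.
    by rewrite ltnNge; apply/negP => c; apply: nC; exists d.
  exact/finite_image/finite_II.
split.
  have [y hy] := G_nonempty (rcons (cp valid (val p) n) N).
  move=> e.
  have : (\bigcup_(t in [set rcons (cp valid (val p) n) d | d in [set d | N <= d]]) G t) y.
    exists (rcons (cp valid (val p) n) N); last exact: hy.
    by exists N => /=.
  by rewrite e.
move=> y [t [d hdN <-] Gy]; apply: hVU => l hl.
have hl' : iota l < b' by rewrite /b'; lia.
move: Gy; rewrite /G /= size_rcons mkseqS => /rcons_inj [e1 e2].
have ecp : cp valid (val y) n = cp valid (val p) n.
  by rewrite (cp_mkseq vj0) -(size_cp valid (val p) n) e1.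
have ha k : k < n -> addr (H l) (y l) k = addr (H l) (p l) k.
  move=> hk; rewrite -!val_iota; apply: (cp_inj vj0 ecp); [exact: valid_iota | lia].
have hnode : node (H l) (y l) n = node (H l) (p l) n.
  rewrite !node_mkseq; apply: (@eq_from_nth _ 0); rewrite ?size_mkseq // => i hi.
  by rewrite !nth_mkseq //; exact: ha.
have hd' : d <= addr (H l) (y l) n.
  rewrite -e2 -val_iota size_cp /cx.
  have hs : sz valid n < sz valid n.+1.
    by rewrite /=; have := gp_ne vj0 (m := n) ltac:(rewrite /b' in hbn; lia); lia.
  rewrite (code_cp vj0 (val y) hs).
  apply: (cp_min vj0); [exact: valid_iota | lia].
have hin : H l (rcons (node (H l) (p l) n) (addr (H l) (y l) n)) (y l).
  rewrite -hnode; have := node_in (hls l) (hroot l) (y l) n.+1.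
  by rewrite node_mkseq mkseqS -node_mkseq.
exact: (hN l hl' _ (leq_trans hdN hd') _ hin).
Qed.

End Main.

Theorem theorem9 (Lambda : Type) (X : Lambda -> topologicalType)
  (H : forall l, foliage (X l))
  (hcount : countable [set: Lambda])
  (htwo : exists l1 l2 : Lambda, l1 <> l2)
  (hH : forall l, pi_tree (H l))
  (hrise : forall J : set Lambda, finite_set J -> J <> set0 ->
     forall R : Lambda -> set nat,
       (forall i, J i -> Rise (H i) (R i)) ->
       infinite_set (\bigcap_(i in J) R i)) :
  has_pi_tree (prod_topology X).
Proof.
have /countable_injP [f finj] := hcount.
have finj' : injective f by move=> a b e; apply: finj; rewrite ?in_setT.
have [l1 _] := htwo.
have hls l : locally_strict (H l) by have [[_ [h _]] _] := hH l.
have hsb l : strict_branches (H l) by have [[_ [_ [h _]]] _] := hH l.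
have hroot l : H l [::] = setT by have [[_ [_ [_ h]]] _] := hH l.
have hop l : open_foliage (H l) by have [[h _] _] := hH l.
exists (G Lambda X H f l1).
split; first split.
- move=> s; exact: G_open.
- split; first exact: G_ls.
  split; first exact: G_sb.
  exact: G_root.
- exact: G_grows.
Qed.
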